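(* Let $w$ be a word of odd rank and $c$ a legal point of $\mathcal C_w$ whose intersection sequence $T(c)$ is simple. Then the polygonal $\mathcal G(c)$ is regular.
   Context: For real parameters $\mathrm a,\mathrm b$, the map $F:\mathbb R^2\to\mathbb R^2$ is $F(x,y)=(\mathrm a x-y,x)$ if $x>0$ or ($x=0$ and $y\le0$), and $F(x,y)=(\mathrm b x-y,x)$ otherwise. Letter $a$ is assigned to points in the open right half-plane or on the negative $y$-axis, and $b$ otherwise. Boundary rays are the $y$ semi-axes $L^\pm$. For a word $w=w_0\cdots w_{n-1}$: $Q_{-1}=-1$, $Q_0=0$, $Q_{t+1}=w_tQ_t-Q_{t-1}$ (letters specialised to $\mathrm a,\mathrm b$). The rank is $1+|w|_{ab}+|w|_{ba}$. For odd rank, with $\mathbf k=\lfloor n/2\rfloor$, $C_w=Q_{\mathbf k+1}-Q_{\mathbf k}$ ($n$ odd) or $Q_{\mathbf k+1}-Q_{\mathbf k-1}$ ($n$ even), and $\mathcal C_w=\{C_w=0\}$. A legal point of $\mathcal C_w$ is a parameter pair at which $w$ is equivalent to the symbolic word of the actual $F$-orbit segment between the two boundary rays. Equivalence allows changing letters at positions where the orbit lies on a boundary ray; equivalence ''at $c$'' refers to this orbit at parameters $c$. Intersection sequence: $T(c)=(t_1,t_2,\dots)$, the increasing list of $t$ with $0<t<n$ and $Q_t(c)=0$. $T(c)$ is simple if it is empty or if the word $w_0\cdots w_{t_1-1}$ is equivalent at $c$ to a word of rank $1$. Polygonal: let $\gamma_t=(Q_t^2,0)$ if $w_t=a$ and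 $\gamma_t=(0,Q_t^2)$ if $w_t=b$, and $\Gamma_t=\sum_{i=0}^t\gamma_i$ for $t=0,\dots,n-1$. $\mathcal G(c)$ is the polygonal line through $\Gamma_0(c),\dots,\Gamma_{n-1}(c)$. An intersection point of $\mathcal G$ is a $\Gamma_t$ with $\Gamma_t=\Gamma_{t-1}$. The median of $\mathcal G$ is the segment $[\Gamma_0,\Gamma_{n-1}]$. $\mathcal G$ is regular if no intersection point lies on its median. *)

(* Defs.v *)
From HB Require Import structures.
From mathcomp Require Import all_boot all_order all_algebra.
From mathcomp Require Import reals.
Set Implicit Arguments. Unset Strict Implicit. Unset Printing Implicit Defensive.
Import Order.TTheory GRing.Theory Num.Theory.
Local Open Scope ring_scope.

Inductive letter := La | Lb.

Definition letter_eqb (u v : letter) : bool :=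
  match u, v with La, La | Lb, Lb => true | _, _ => false end.
Lemma letter_eqP : Equality.axiom letter_eqb.
Proof. by case; case; constructor. Qed.
HB.instance Definition _ := hasDecEq.Build letter letter_eqP.

Definition word := seq letter.

Section Defs.
Variable R : realType.

Definition spec (c : R * R) (l : letter) : R :=
  match l with La => c.1 | Lb => c.2 end.

Definition in_a (p : R * R) : bool := (0 < p.1) || ((p.1 == 0) && (p.2 <= 0)).
Definition letter_of (p : R * R) : letter := if in_a p then La else Lb.
Definition Fmap (c : R * R) (p : R * R) : R * R :=
  (spec c (letter_of p) * p.1 - p.2, p.1).

Fixpoint orbit (c : R * R) (t : nat) : R * R :=
  match t with 0 => (0, -1) | t'.+1 => Fmap c (orbit c t') end.

Definition on_boundary (p : R * R) : Prop := p.1 = 0.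
Definition on_Lplus (p : R * R) : Prop := p.1 = 0 /\ 0 <= p.2.

Definition itinerary (c : R * R) (n : nat) : word :=
  mkseq (fun t => letter_of (orbit c t)) n.

Definition equiv_at (c : R * R) (u v : word) : Prop :=
  size u = size v /\
  forall t, (t < size u)%N -> nth La u t <> nth La v t ->
    on_boundary (orbit c t).

Fixpoint Qp (w : word) (c : R * R) (t : nat) : R * R :=
  match t with
  | 0 => (-1, 0)
  | t'.+1 => let q := Qp w c t' in
             (q.2, spec c (nth La w t') * q.2 - q.1)
  end.
(** Q t = Q_t, Qprev t = Q_{t-1} (so Qprev 0 = Q_{-1} = -1). *)
Definition Q (w : word) (c : R * R) (t : nat) : R := (Qp w c t).2.
Definition Qprev (w : word) (c : R * R) (t : nat) : R := (Qp w c t).1.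

Definition rank (w : word) : nat :=
  (1 + \sum_(0 <= i < (size w).-1) (nth La w i != nth La w i.+1))%N.

Definition Cw (w : word) (c : R * R) : R :=
  let n := size w in let k := n./2 in
  if odd n then Q w c k.+1 - Q w c k else Q w c k.+1 - Qprev w c k.

Definition legal (w : word) (c : R * R) : Prop :=
  Cw w c = 0 /\
  on_Lplus (orbit c (size w)) /\
  equiv_at c w (itinerary c (size w)).

Definition Tseq (w : word) (c : R * R) : seq nat :=
  [seq t <- iota 1 (size w).-1 | Q w c t == 0].

Definition T_simple (w : word) (c : R * R) : Prop :=
  Tseq w c = [::] \/
  exists u : word, rank u = 1%N /\
    equiv_at c (take (head 0%N (Tseq w c)) w) u.

Definition Gamma (w : word) (c : R * R) (t : nat) : R * R :=
  (\sum_(0 <= i < t.+1) (if nth La w i == La then Q w c i ^+ 2 else 0),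
   \sum_(0 <= i < t.+1) (if nth La w i == Lb then Q w c i ^+ 2 else 0)).

Definition on_segment (P A B : R * R) : Prop :=
  exists s : R, 0 <= s <= 1 /\
    P.1 = A.1 + s * (B.1 - A.1) /\ P.2 = A.2 + s * (B.2 - A.2).

Definition regular (w : word) (c : R * R) : Prop :=
  forall t, (0 < t < size w)%N -> Gamma w c t = Gamma w c t.-1 ->
    ~ on_segment (Gamma w c t) (Gamma w c 0) (Gamma w c (size w).-1).

End Defs.

(* Main.v *)
Require Import Defs.
From mathcomp Require Import all_boot all_order all_algebra reals.
From mathcomp Require Import ring lra zify.
Set Implicit Arguments. Unset Strict Implicit. Unset Printing Implicit Defensive.
Import Order.TTheory GRing.Theory Num.Theory.
Local Open Scope ring_scope.

Section Aux.
Variable R : realType.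
Variable c : R * R.

Definition sc (k : R) (u : R * R) : R * R := (k * u.1, k * u.2).

Lemma in_a_sc (k : R) (u : R * R) : 0 < k -> in_a (sc k u) = in_a u.
Proof.
move=> k0; rewrite /in_a /sc /=.
rewrite pmulr_rgt0 // mulf_eq0 (gt_eqF k0) /= pmulr_rle0 //.
Qed.

Lemma Fmap_sc (k : R) (u : R * R) : 0 < k -> Fmap c (sc k u) = sc k (Fmap c u).
Proof.
move=> k0; rewrite /Fmap /letter_of in_a_sc // /sc /=.
congr (_, _); ring.
Qed.

Lemma shift (z z' : nat) (k : R) : 0 < k -> Defs.orbit c z = sc k (Defs.orbit c z') ->
  forall s, Defs.orbit c (z + s)%N = sc k (Defs.orbit c (z' + s)%N).
Proof.
move=> k0 H; elim=> [|s IH]; first by rewrite !addn0.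
by rewrite !addnS /= IH Fmap_sc.
Qed.

Lemma orbit_nz t : Defs.orbit c t <> (0, 0).
Proof.
elim: t => [|t IH] /=; first by case=> /eqP; rewrite oppr_eq0 oner_eq0.
rewrite /Fmap; case: (Defs.orbit c t) IH => u1 u2 /= IH [] H1 H2.
by apply: IH; rewrite H2 mulr0 sub0r in H1; rewrite H2 -[u2]opprK H1 oppr0.
Qed.

Lemma period (z0 T : nat) (k : R) : 0 < k -> Defs.orbit c (z0 + T)%N = sc k (Defs.orbit c z0) ->
  forall i s, Defs.orbit c (z0 + i * T + s)%N = sc (k ^+ i) (Defs.orbit c (z0 + s)%N).
Proof.
move=> k0 H; elim=> [|i IH] s.
  by rewrite mul0n addn0 expr0 /sc !mul1r; case: (Defs.orbit c _).
have -> : (z0 + i.+1 * T + s = (z0 + T) + (i * T + s))%N by rewrite mulSn; lia.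
rewrite (shift k0 H) addnA IH /sc /= exprS; congr (_, _); ring.
Qed.


Definition gxp (u : R * R) : R := if 0 < u.1 then u.1 ^+ 2 else 0.
Definition gyp (u : R * R) : R := if 0 < u.1 then 0 else u.1 ^+ 2.
Definition xo (t : nat) : R := (Defs.orbit c t).1.
Definition gx (t : nat) : R := gxp (Defs.orbit c t).
Definition gy (t : nat) : R := gyp (Defs.orbit c t).

Lemma gxp_sc k u : 0 < k -> gxp (sc k u) = k ^+ 2 * gxp u.
Proof.
move=> k0; rewrite /gxp /sc /= pmulr_rgt0 //; case: ifP => _; last by rewrite mulr0.
by rewrite exprMn.
Qed.

Lemma gyp_sc k u : 0 < k -> gyp (sc k u) = k ^+ 2 * gyp u.
Proof.
move=> k0; rewrite /gyp /sc /= pmulr_rgt0 //; case: ifP => _; first by rewrite mulr0.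
by rewrite exprMn.
Qed.

Lemma gxp_ge0 u : 0 <= gxp u.
Proof. by rewrite /gxp; case: ifP => _ //; rewrite sqr_ge0. Qed.
Lemma gyp_ge0 u : 0 <= gyp u.
Proof. by rewrite /gyp; case: ifP => _ //; rewrite sqr_ge0. Qed.

Definition W (f : nat -> R) (s l : nat) : R := \sum_(0 <= i < l) f (s + i)%N.

Lemma W_add f s l1 l2 : W f s (l1 + l2) = W f s l1 + W f (s + l1) l2.
Proof.
elim: l2 => [|l2 IH]; first by rewrite addn0 [W f _ 0]/W big_geq // addr0.
by rewrite addnS /W !big_nat_recr //= -/(W f s (l1 + l2)) IH /W addrA addnA.
Qed.

Lemma W_ge0 f s l : (forall i, 0 <= f i) -> 0 <= W f s l.
Proof. by move=> H; rewrite /W; apply: sumr_ge0 => i _. Qed.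

Lemma W_ge f s l j : (forall i, 0 <= f i) -> (j < l)%N -> f (s + j)%N <= W f s l.
Proof.
move=> H jl; have -> : l = (j + (l - j).-1.+1)%N by lia.
rewrite W_add [W f (s + j) _]/W big_nat_recl //= addn0.
have h1 := W_ge0 s j H.
have h2 : 0 <= \sum_(0 <= i < (l - j).-1) f (s + j + i.+1)%N by apply: sumr_ge0.
lra.
Qed.

Lemma W_scale f s s' r l : (forall m, f (s + m)%N = r * f (s' + m)%N) ->
  W f s l = r * W f s' l.
Proof. by move=> H; rewrite /W mulr_sumr; apply: eq_bigr => i _; rewrite H. Qed.

Definition S (rho : R) (i : nat) : R := \sum_(j < i) rho ^+ j.

Lemma S_recl rho i : S rho i.+1 = 1 + rho * S rho i.
Proof.
rewrite /S big_ord_recl expr0 mulr_sumr; congr (_ + _).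
by apply: eq_bigr => j _; rewrite exprS.
Qed.

Lemma S_recr rho i : S rho i.+1 = S rho i + rho ^+ i.
Proof. by rewrite /S big_ord_recr. Qed.

Lemma S_split rho a b : S rho (a + b) = S rho b + rho ^+ b * S rho a.
Proof.
elim: a => [|a IH]; first by rewrite add0n /S big_ord0 mulr0 addr0.
by rewrite addSn !S_recr IH mulrDr -exprD addnC; ring.
Qed.

Lemma S_ge0 rho i : 0 < rho -> 0 <= S rho i.
Proof. by move=> r0; apply: sumr_ge0 => j _; rewrite exprn_ge0 // ltW. Qed.

Lemma S_gt0 rho i : 0 < rho -> (0 < i)%N -> 0 < S rho i.
Proof.
move=> r0; case: i => // i _; rewrite S_recr.
by rewrite ltr_wpDl ?S_ge0 // exprn_gt0.
Qed.

Lemma W_period f z0 T rho :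
  (forall i s, f (z0 + i * T + s)%N = rho ^+ i * f (z0 + s)%N) ->
  forall i s, W f 0 (z0 + i * T + s) =
     W f 0 z0 + S rho i * W f z0 T + rho ^+ i * W f z0 s.
Proof.
move=> H i s; rewrite -addnA W_add add0n -addrA; congr (_ + _).
elim: i => [|i IH]; first by rewrite mul0n add0n /S big_ord0 mul0r add0r expr0 mul1r.
have -> : (i.+1 * T + s = T + (i * T + s))%N by rewrite mulSn addnA.
rewrite W_add (@W_scale f (z0 + T) z0 rho) ?IH.
  by rewrite S_recl exprS; ring.
by move=> m; have := H 1%N m; rewrite mul1n expr1.
Qed.

Lemma letter_La (u : R * R) : u.1 != 0 -> (letter_of u == La) = (0 < u.1).
Proof.
move=> h; rewrite /letter_of /in_a (negbTE h) andFb orbF.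
by case: ifP.
Qed.

Lemma Qp_orbit (w : word) :
  (forall t, (t < size w)%N -> nth La w t <> letter_of (Defs.orbit c t) -> xo t = 0) ->
  forall t, (t <= size w)%N -> Qp w c t = ((Defs.orbit c t).2, (Defs.orbit c t).1).
Proof.
move=> H; elim=> [|t IH] ht /=; first by [].
rewrite IH 1?ltnW //= /Fmap /=; congr (_, _).
case: (eqVneq (nth La w t) (letter_of (Defs.orbit c t))) => [->//|hne].
by move: (H t ht (elimN eqP hne)); rewrite /xo => ->; rewrite !mulr0.
Qed.

Lemma Gamma_W (w : word) :
  (forall t, (t < size w)%N -> nth La w t <> letter_of (Defs.orbit c t) -> xo t = 0) ->
  forall t, (t < size w)%N -> Gamma w c t = (W gx 0 t.+1, W gy 0 t.+1).
Proof.
move=> H t ht; have HQ := Qp_orbit H.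
have key : forall i, (i < t.+1)%N ->
   Q w c i = xo i /\ (xo i != 0 -> (nth La w i == La) = (0 < xo i)).
  move=> i hi; have hin : (i < size w)%N by apply: leq_trans hi ht.
  split; first by rewrite /Q HQ // ltnW.
  move=> hx; have hl : nth La w i = letter_of (Defs.orbit c i).
    case: (eqVneq (nth La w i) (letter_of (Defs.orbit c i))) => // /eqP hne.
    by move: (H i hin hne) => h; rewrite h eqxx in hx.
  by rewrite hl letter_La.
rewrite /Gamma /W; congr (_, _); apply: eq_big_nat => i /andP[_ hi];
  rewrite add0n; have [-> hl] := key i hi;
  rewrite /gx /gy /gxp /gyp -/(xo i);
  (case: (eqVneq (xo i) 0) => [->|hx]; first by rewrite expr0n /=; case: ifP; case: ifP).
  by rewrite hl.
have := hl hx; case: (nth La w i) => /=; by move=> <-.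
Qed.


Lemma orbit0 : Defs.orbit c 0 = (0, -1).
Proof. by []. Qed.

Lemma xo_sc z z' k : Defs.orbit c z = sc k (Defs.orbit c z') -> xo z = k * xo z'.
Proof. by rewrite /xo => ->. Qed.

Lemma core (n p t : nat) :
  (1 < p)%N -> (p <= t)%N -> (t < n)%N ->
  (forall i, (0 < i < p)%N -> 0 < xo i) -> xo p = 0 ->
  xo n = 0 -> 0 <= (Defs.orbit c n).2 -> xo t = 0 ->
  W gx 0 t * W gy 0 n - W gy 0 t * W gx 0 n != 0.
Proof.
move=> p1 pt tn Hpos Hp Hn Hn2 Ht.
set lam := xo p.-1.
have lam0 : 0 < lam by apply: Hpos; clear -p1; lia.
have op : Defs.orbit c p = (0, lam).
  rewrite -Hp /lam /xo; have -> : p = p.-1.+1 by clear -p1; lia.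
  by rewrite /= /Fmap /=; case: (Defs.orbit c p.-1).
have op1 : Defs.orbit c p.+1 = (- lam, 0).
  rewrite /= op /Fmap /letter_of /in_a /= ltxx eqxx /= leNgt lam0 /=.
  by rewrite mulr0 sub0r.
have gyp1 : gy p.+1 = lam ^+ 2 by rewrite /gy op1 /gyp /= oppr_gt0 (lt_gtF lam0) sqrrN.
have gyp1_gt0 : 0 < gy p.+1 by rewrite gyp1 exprn_gt0.
have E2 : W gy 0 p = 0.
  rewrite /W big_nat_cond big1 // => i /andP[/andP[_ hi] _].
  rewrite add0n /gy /gyp -/(xo i).
  case: (posnP i) => [->|ip]; first by rewrite /xo /= ltxx expr0n.
  by rewrite Hpos // ip.
have E1 : 0 < W gx 0 p.
  apply: (@lt_le_trans _ _ (gx (0 + 1)%N)); last by apply: W_ge => // j; apply: gxp_ge0.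
  by rewrite /gx /gxp /= /Fmap /letter_of /in_a /= ltxx eqxx /= lerN10 /= mulr0 sub0r opprK ltr01 expr1n.
have hex : exists m, (p < m)%N && (xo m == 0) by exists n; rewrite Hn eqxx andbT; clear -pt tn; lia.
case: (ex_minnP hex) => p2 /andP[pp2 /eqP x2] hmin.
have p2n : (p2 <= n)%N by apply: hmin; rewrite Hn eqxx andbT; clear -pt tn; lia.
have nz : forall m, (p < m < p2)%N -> xo m != 0.
  move=> m /andP[a b]; apply/eqP => hm.
  by move: (hmin m); rewrite a hm eqxx => /(_ isT); rewrite leqNgt b.
have pp21 : (p.+1 < p2)%N.
  rewrite ltn_neqAle pp2 andbT; apply/eqP => e.
  by move: x2; rewrite -e /xo op1 /= => /eqP; rewrite oppr_eq0 (gt_eqF lam0).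
set y2 := (Defs.orbit c p2).2.
have op2 : Defs.orbit c p2 = (0, y2) by rewrite -x2 /y2 /xo; case: (Defs.orbit c p2).
have y2nz : y2 != 0.
  by apply/eqP => e; apply: (@orbit_nz p2); rewrite op2 e.
have gxge := gxp_ge0; have gyge := gyp_ge0.
case: (ltrgtP y2 0) => [y2n|y2p|]; last by move/eqP: y2nz.
- (* return to L^- *)
  set k := - y2.
  have k0 : 0 < k by rewrite oppr_gt0.
  have Hsc : Defs.orbit c (0 + p2)%N = sc k (Defs.orbit c 0).
    by rewrite add0n op2 orbit0 /sc /k /= mulr0 mulrN1 opprK.
  have hper := period k0 Hsc.
  have fx : forall i s, gx (0 + i * p2 + s)%N = (k ^+ 2) ^+ i * gx (0 + s)%N.
    by move=> i s; rewrite /gx hper gxp_sc ?exprn_gt0 // exprAC.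
  have fy : forall i s, gy (0 + i * p2 + s)%N = (k ^+ 2) ^+ i * gy (0 + s)%N.
    by move=> i s; rewrite /gy hper gyp_sc ?exprn_gt0 // exprAC.
  have xper : forall i s, xo (0 + i * p2 + s)%N = k ^+ i * xo s.
    by move=> i s; rewrite (xo_sc (hper i s)) add0n.
  have p20 : (0 < p2)%N by clear -pp2; lia.
  have dec : forall m, xo m = 0 -> (m = 0 + (m %/ p2) * p2 + (m %% p2))%N /\
                 ((m %% p2) = 0 \/ (m %% p2) = p)%N.
    move=> m hm; split; first by rewrite add0n -divn_eq.
    have hs : xo (m %% p2)%N = 0.
      move: hm; rewrite {1}(divn_eq m p2) -[(_ + _)%N]add0n xper => /eqP.
      by rewrite mulf_eq0 expf_eq0 (gt_eqF k0) andbF /= => /eqP.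
    have slt : ((m %% p2)%N < p2)%N by rewrite ltn_pmod.
    case: (ltngtP (m %% p2)%N p) => [a|a|->]; [left|exfalso|by right].
      case: (posnP (m %% p2)%N) => // b; exfalso.
      by move: (Hpos (m %% p2)%N); rewrite b a hs ltxx => /(_ isT).
    by move: (nz (m %% p2)%N); rewrite a slt hs eqxx => /(_ isT).
  have [en [ens|ens]] := dec n Hn.
    exfalso; move: Hn2; rewrite en ens hper add0n orbit0 /sc /= mulrN1.
    by rewrite oppr_ge0 leNgt exprn_gt0.
  have [et ets] := dec t Ht.
  set i := (t %/ p2)%N in et; set K := (n %/ p2)%N in en.
  rewrite ens in en.
  set rho := k ^+ 2.
  have rho0 : 0 < rho by rewrite exprn_gt0.
  have W00 : forall f, W f 0 0 = 0 by move=> f; rewrite /W big_geq.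
  have X2 : 0 < W gy 0 p2.
    apply: (lt_le_trans gyp1_gt0).
    exact: (@W_ge gy 0 p2 p.+1 (fun i => gyp_ge0 _) pp21).
  rewrite en (W_period fx) (W_period fy) !W00 E2 !add0r.
  case: ets => ets; rewrite ets in et; rewrite et (W_period fx) (W_period fy) !W00 ?E2 !add0r ?mulr0 ?addr0.
  + have ip : (0 < i)%N by move: pt; rewrite et => pt'; clear -p1 pt'; lia.
    set X1 := W gx 0 p2; set Y := W gy 0 p2; set Ee := W gx 0 p.
    have -> : S rho i * X1 * (S rho K * Y) - S rho i * Y * (S rho K * X1 + rho ^+ K * Ee)
        = - (S rho i * Y * rho ^+ K * Ee) by ring.
    rewrite oppr_eq0 gt_eqF // !mulr_gt0 ?exprn_gt0 //; exact: S_gt0.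
  + have iK : (i < K)%N by move: tn; rewrite et en; rewrite ltn_add2r ltn_mul2r; clear; lia.
    have [m eK] : exists m, K = (i + m.+1)%N by exists (K - i).-1; clear -iK; lia.
    rewrite eK S_split exprD.
    set X1 := W gx 0 p2; set Y := W gy 0 p2; set Ee := W gx 0 p.
    have -> : (S rho i * X1 + rho ^+ i * Ee) * ((S rho m.+1 + rho ^+ m.+1 * S rho i) * Y) -
              S rho i * Y * ((S rho m.+1 + rho ^+ m.+1 * S rho i) * X1 + rho ^+ i * rho ^+ m.+1 * Ee)
        = Y * Ee * (rho ^+ i * S rho m.+1) by ring.
    rewrite gt_eqF // !mulr_gt0 ?exprn_gt0 //; exact: S_gt0.
- (* return to L^+ *)
  set k := y2 / lam.
  have k0 : 0 < k by rewrite divr_gt0.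
  set T := (p2 - p)%N.
  have Hsc : Defs.orbit c (p + T)%N = sc k (Defs.orbit c p).
    rewrite /T subnKC; last exact: ltnW pp2.
    by rewrite op2 op /sc /k /= mulr0 divfK // lt0r_neq0.
  have hper := period k0 Hsc.
  have fx : forall i s, gx (p + i * T + s)%N = (k ^+ 2) ^+ i * gx (p + s)%N.
    by move=> i s; rewrite /gx hper gxp_sc ?exprn_gt0 // exprAC.
  have fy : forall i s, gy (p + i * T + s)%N = (k ^+ 2) ^+ i * gy (p + s)%N.
    by move=> i s; rewrite /gy hper gyp_sc ?exprn_gt0 // exprAC.
  have xper : forall i s, xo (p + i * T + s)%N = k ^+ i * xo (p + s)%N.
    by move=> i s; rewrite (xo_sc (hper i s)).
  have T0 : (1 < T)%N by rewrite /T; clear -pp21; lia.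
  have dec : forall m, (p <= m)%N -> xo m = 0 -> (m = p + ((m - p) %/ T)%N * T + 0)%N.
    move=> m pm hm.
    have em : m = (p + ((m - p) %/ T)%N * T + ((m - p) %% T)%N)%N by rewrite -addnA -divn_eq; clear -pm; lia.
    have hs : xo (p + ((m - p) %% T)%N)%N = 0.
      move: hm; rewrite {1}em xper => /eqP.
      by rewrite mulf_eq0 expf_eq0 (gt_eqF k0) andbF /= => /eqP.
    have slt : (((m - p) %% T)%N < T)%N by rewrite ltn_pmod //; clear -T0; lia.
    case: (posnP (((m - p) %% T)%N)) => [e|b]; first by rewrite {1}em e.
    have hh : (p < p + ((m - p) %% T) < p2)%N.
      by apply/andP; split; rewrite /T in slt b *; clear -b slt pp2; lia.
    by move: (nz _ hh); rewrite hs eqxx.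
  have en := dec n (ltnW (leq_ltn_trans pt tn)) Hn.
  have et := dec t pt Ht.
  set i := ((t - p) %/ T)%N in et; set K := ((n - p) %/ T)%N in en.
  set rho := k ^+ 2.
  have rho0 : 0 < rho by rewrite exprn_gt0.
  have W0 : forall f, W f p 0 = 0 by move=> f; rewrite /W big_geq.
  have V2 : 0 < W gy p T.
    apply: (lt_le_trans gyp1_gt0); rewrite -addn1.
    exact: (@W_ge gy p T 1 (fun i => gyp_ge0 _) T0).
  have iK : (i < K)%N by move: tn; rewrite {1}et {1}en !addn0 ltn_add2l ltn_mul2r; clear; lia.
  have [m eK] : exists m, K = (m.+1 + i)%N by exists (K - i).-1; clear -iK; lia.
  rewrite en et (W_period fx) (W_period fy) (W_period fx) (W_period fy) !W0 E2 !mulr0 !addr0 !add0r.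
  rewrite eK S_split.
  set V1 := W gx p T; set Y := W gy p T; set Ee := W gx 0 p.
  have -> : (Ee + S rho i * V1) * ((S rho i + rho ^+ i * S rho m.+1) * Y) -
            S rho i * Y * (Ee + (S rho i + rho ^+ i * S rho m.+1) * V1)
      = Ee * Y * (rho ^+ i * S rho m.+1) by ring.
  rewrite gt_eqF // !mulr_gt0 ?exprn_gt0 //; exact: S_gt0.
Qed.

Lemma W_S f s l : W f s l.+1 = W f s l + f (s + l)%N.
Proof. by rewrite /W big_nat_recr. Qed.

Lemma xo1 : xo 1 = 1.
Proof. by rewrite /xo /= /Fmap /letter_of /in_a /= ltxx eqxx /= lerN10 /= mulr0 sub0r opprK. Qed.

Lemma gx0 : gx 0 = 0.
Proof. by rewrite /gx /gxp /= ltxx. Qed.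
Lemma gy0 : gy 0 = 0.
Proof. by rewrite /gy /gyp /= ltxx expr0n. Qed.

Lemma gxy_zero t : gx t = 0 -> gy t = 0 -> xo t = 0.
Proof.
rewrite /gx /gy /gxp /gyp -/(xo t); case: ifP => _ h1 h2.
  by move/eqP: h1; rewrite expf_eq0 /= => /eqP.
by move/eqP: h2; rewrite expf_eq0 /= => /eqP.
Qed.

Lemma gxy_of_zero t : xo t = 0 -> gx t = 0 /\ gy t = 0.
Proof. by rewrite /gx /gy /gxp /gyp -/(xo t) => ->; rewrite ltxx expr0n. Qed.

End Aux.

Lemma filter_iota_head (P : pred nat) m l h r :
  [seq j <- iota m l | P j] = h :: r ->
  [/\ (m <= h)%N, (h < m + l)%N, P h & forall j, (m <= j < h)%N -> ~~ P j].
Proof.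
elim: l m => [|l IH] m //=; case: ifP => Pm.
  case=> <- _; split=> //; first by rewrite addnS ltnS leq_addr.
  by move=> j /andP[a b]; move: (leq_ltn_trans a b); rewrite ltnn.
move=> /IH [h1 h2 h3 h4]; split=> //.
- exact: ltnW.
- by rewrite addnS -addSn.
move=> j /andP[hj1 hj2]; case: (eqVneq j m) => [->|ne]; first by rewrite Pm.
apply: h4; rewrite hj2 andbT ltn_neqAle eq_sym ne //.
Qed.

Lemma rank1_const (u : word) : rank u = 1%N ->
  forall i, (i.+1 < size u)%N -> nth La u i = nth La u i.+1.
Proof.
rewrite /rank => h i hi.
have hs : (\sum_(0 <= j < (size u).-1) (nth La u j != nth La u j.+1) == 0)%N.
  by move/eqP: h; rewrite -{2}[1%N]addn0 eqn_add2l.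
have hi' : (i < (size u).-1)%N by rewrite -ltnS prednK // (leq_ltn_trans _ hi).
rewrite (@big_cat_nat _ _ _ i) //= ?(ltnW hi') // (big_ltn hi') in hs.
by move: hs; rewrite !addn_eq0 eqb0 negbK => /andP[_ /andP[/eqP -> _]].
Qed.

Lemma const_from1 (u : word) : rank u = 1%N ->
  forall i, (0 < i < size u)%N -> nth La u i = nth La u 1.
Proof.
move=> hr; elim=> [|i IH] // /andP[_ hi].
case: (posnP i) => [->|ip] //.
rewrite -(rank1_const hr hi) IH //; apply/andP; split => //; exact: ltnW.
Qed.

Theorem mainTheorem12 (R : realType) (w : word) (c : R * R) :
  odd (rank w) -> legal w c -> T_simple w c -> regular w c.
Proof.
move=> _ [_ [[HL1 HL2] [Hsz Heqv]]] HT t /andP[t0 tn] HG Hseg.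
have Heq : forall i, (i < size w)%N -> nth La w i <> letter_of (Defs.orbit c i) -> xo c i = 0.
  move=> i hi hne; apply: (Heqv i hi); by rewrite /itinerary nth_mkseq.
have HQ : forall i, (i <= size w)%N -> Q w c i = xo c i.
  by move=> i hi; rewrite /Q (Qp_orbit Heq).
have HGam := Gamma_W Heq.
have Ht : xo c t = 0.
  move: HG; rewrite !HGam ?(leq_ltn_trans (leq_pred t)) // prednK // !W_S add0n.
  case=> /eqP h1 /eqP h2; apply: gxy_zero.
    by move: h1; rewrite -subr_eq0 addrC addKr => /eqP.
  by move: h2; rewrite -subr_eq0 addrC addKr => /eqP.
have tT : t \in Tseq w c.
  rewrite /Tseq mem_filter HQ; last exact: ltnW tn.
  rewrite Ht eqxx /= mem_iota t0 /= add1n prednK //; exact: leq_ltn_trans (leq0n t) tn.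
case: HT => [He|[u [ru equ]]]; first by rewrite He in tT.
case eT : (Tseq w c) tT => [|p r] // tT.
have [p1 pn Pp Pbef] := filter_iota_head eT.
rewrite eT /= in equ.
have pn' : (p < size w)%N by move: pn; rewrite add1n prednK //; exact: leq_ltn_trans tn.
have Hp : xo c p = 0 by move/eqP: Pp; rewrite HQ //; exact: ltnW pn'.
have nzb : forall j, (0 < j < p)%N -> xo c j != 0.
  move=> j /andP[a b]; move: (Pbef j); rewrite a b HQ //; first by move=> /(_ isT).
  exact: (leq_trans (ltnW b) (ltnW pn')).
have p1' : (1 < p)%N.
  rewrite ltn_neqAle p1 andbT; apply/eqP => e; move: Hp; rewrite -e xo1 => /eqP.
  by rewrite oner_eq0.
have pt : (p <= t)%N.
  rewrite leqNgt; apply/negP => tp; move: (nzb t); rewrite t0 tp Ht eqxx.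
  by move=> /(_ isT).
case: equ => sz equ.
have szp : size (take p w) = p by rewrite size_take pn'.
have Hpos : forall i, (0 < i < p)%N -> 0 < xo c i.
  have letw : forall i, (0 < i < p)%N -> nth La w i = letter_of (Defs.orbit c i).
    move=> i hi; case: (eqVneq (nth La w i) (letter_of (Defs.orbit c i))) => // /eqP hne.
    move: (Heq i) (nzb i hi) => /(_ _ hne) -> //; last by case/andP: hi => _ hi; exact: ltn_trans hi pn'.
    by rewrite eqxx.
  have letu : forall i, (0 < i < p)%N -> nth La w i = nth La u i.
    move=> i hi; rewrite -(nth_take _ (n0 := p)); last by case/andP: hi.
    case: (eqVneq (nth La (take p w) i) (nth La u i)) => // /eqP hne.
    have := equ i; rewrite szp; case/andP: hi => hi1 hi2; move=> /(_ hi2 hne) hb.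
    by move: (nzb i); rewrite hi1 hi2 /= /xo hb eqxx => /(_ isT).
  have h11 : (0 < 1 < p)%N by rewrite p1'.
  move=> i hi; have := letw i hi.
  rewrite letu // const_from1 //; last by rewrite -sz szp.
  rewrite -letu // letw // => e.
  have : letter_of (Defs.orbit c 1) = La.
    by rewrite /letter_of /in_a /= /Fmap /letter_of /in_a /= ltxx eqxx /= lerN10 /= mulr0 sub0r opprK ltr01.
  move=> h1; move: e; rewrite h1 => /esym/eqP; rewrite letter_La //; exact: nzb.
have := core p1' pt tn Hpos Hp HL1 HL2 Ht.
have [gxt gyt] := gxy_of_zero Ht.
case: Hseg => s [_ [e1 e2]].
have n0 : (0 < size w)%N by exact: leq_ltn_trans (leq0n t) tn.
move: e1 e2; rewrite (HGam t tn) (HGam 0%N n0) (HGam (size w).-1); last by rewrite prednK.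
rewrite prednK //.
have W00 : forall f, W (R:=R) f 0 0 = 0 by move=> f; rewrite /W big_geq.
rewrite !W_S /= !W00 !add0n gxt gyt gx0 gy0 !addr0 !subr0 !add0r => -> ->.
by rewrite mulrAC subrr eqxx.
Qed.
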